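(* For each $k\ge0$ and each index $\alpha$, let $$\mathcal G_{k,\alpha}:=\Big\langle\mathcal O^{(k)}_\alpha\exp\Big(\sum_\beta\lambda^\beta_0\mathcal O_\beta\Big)\Big\rangle_0\in\mathbb C[[\lambda^\alpha_0]].$$ Then the current observables $\oint_C\mathscr J^{(1)}_{\mathcal G_{k,\alpha}}$ mutually commute with respect to $\{-,-\}_C$: $$\Big\{\oint_C\mathscr J^{(1)}_{\mathcal G_{k,\alpha}},\oint_C\mathscr J^{(1)}_{\mathcal G_{m,\beta}}\Big\}_C=0\quad\text{for all }k,m\ge0\text{ and all }\alpha,\beta.$$
   Context: Genus zero data: $H$ finite-dimensional purely even complex vector space with basis $\{\mathcal O_\alpha\}$, distinguished $P=\mathcal O_1$, $\mathcal O^{(k)}_\alpha=t^k\mathcal O_\alpha$ ($t$ formal); symmetric multilinear genus zero correlators $\langle\mathcal O^{(k_1)}_{\alpha_1}\cdots\mathcal O^{(k_n)}_{\alpha_n}\rangle_0\in\mathbb C$ vanishing for $n<3$, with $g_{\alpha\beta}=\langle\mathcal O_\alpha\mathcal O_\beta P\rangle_0$ nondegenerate (inverse $g^{\alpha\beta}$, used to raise indices: $\mathcal O^{(k)\alpha}=\sum_\beta g^{\alpha\beta}\mathcal O^{(k)}_\beta$), satisfying the genus zero topological recursion relation $\langle\langle\mathcal O^{(i+1)}_\alpha\mathcal O^{(j)}_\beta\mathcal O^{(k)}_\gamma\rangle\rangle_0=\sum_\sigma\langle\langle\mathcal O^{(i)}_\alpha\mathcal O^{(0)\sigma}\rangle\rangle_0\langle\langle\mathcal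 O^{(0)}_\sigma\mathcal O^{(j)}_\beta\mathcal O^{(k)}_\gamma\rangle\rangle_0$, where $\langle\langle\cdots\rangle\rangle_0(\mathbf b)=\langle\cdots e^{\sum b^\alpha_k\mathcal O^{(k)}_\alpha}\rangle_0$ is a formal power series in coordinates $b^\alpha_k$. In $\mathcal G_{k,\alpha}$ the exponential is expanded and the correlator applied multilinearly. Setting on $\mathbb C^\times=\mathbb C/(z\sim z+1)$ with form $dz$: fields $\mathcal E^H=(\mathrm{PV}(\mathbb C^\times)\otimes H)[[t]]$ ($t$ of degree 2, $\mathrm{PV}^{i,j}=\Omega^{0,j}(\wedge^iT^{1,0})$ in degree $i+j$), $\mu=\sum(\lambda^\alpha_k\otimes\mathcal O_\alpha t^k+\rho^\alpha_k\partial_z\otimes\mathcal O_\alpha t^k)$, $\lambda^\alpha_k,\rho^\alpha_k\in\Omega^{0,\bullet}(\mathbb C^\times)$. Trace $\mathrm{Tr}(\mu)=\int(\mu\vdash dz)\wedge dz$; BV kernel $K_0=\sum_\alpha(\mathcal O^\alpha\otimes\mathcal O_\alpha)\partial_z\delta(z-w)(d\bar z-d\bar w)$. $\mathbb C[[\partial_z^m\lambda^\alpha_k,\partial_z^m\rho^\alpha_k]]$: formal power series in even $\partial_z^m\lambda^\alpha_k$ and odd $\partial_z^m\rho^\alpha_k$, with derivation $\partial_z$ raising $m$. For such $\mathcal L$, $\mathscr J_{\mathcal L}=dz\,\mathcal L(\partial_z^m\lambda^\alpha_k,\partial_z^m\rho^\alpha_k)$ (an $\Omega^{\bullet,\bullet}(\mathbb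 C^\times)$-valued function on fields obtained by substitution), with 1-form and 2-form parts $\mathscr J^{(1)}_{\mathcal L},\mathscr J^{(2)}_{\mathcal L}$; $C=\{z\in[0,1]\}$. The bracket is $\{\oint_C\mathscr J^{(1)}_{\mathcal L_1},\oint_C\mathscr J^{(1)}_{\mathcal L_2}\}_C:=\{\int_{\mathbb C^\times}\mathscr J^{(2)}_{\mathcal L_1},\oint_C\mathscr J^{(1)}_{\mathcal L_2}\}_{BV}$, where $\{S,\mathcal O\}_{BV}$ is the derivative of the observable $\mathcal O$ along the field transformation obtained by contracting $K_0$ with the functional derivative of the local functional $S$; concretely it equals $\oint_C\mathscr J^{(1)}_{[\mathcal L_1,\mathcal L_2]}$ with $[\mathcal L_1,\mathcal L_2]=\sum_{\alpha,\beta,k,m}\{(-\partial_z)^k\frac{\partial\mathcal L_1}{\partial(\partial_z^k\lambda^\alpha_0)}\}g^{\alpha\beta}\partial_z\{(-\partial_z)^m\frac{\partial\mathcal L_2}{\partial(\partial_z^m\lambda^\beta_0)}\}$. *)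

(* Defs.v *)
From mathcomp Require Import all_boot all_order all_algebra.
From mathcomp Require Import complex.
From mathcomp Require Import reals.
Set Implicit Arguments. Unset Strict Implicit. Unset Printing Implicit Defensive.
Import GRing.Theory Num.Theory.
Local Open Scope ring_scope.

(* Basis of H: O_a, a : 'I_n.+1, with P = O_1 = index ord0.            *)
(* An insertion (a, k) stands for the basis element O^{(k)}_a = t^k O_a.*)
(* By (symmetric) multilinearity the correlators are determined by     *)
(* their values on lists of basis insertions: corr s.                  *)

Definition ins (n : nat) := ('I_n.+1 * nat)%type.

Section Data.
Variables (K : fieldType) (n : nat).
Implicit Types (corr : seq (ins n) -> K).

Definition corr_symmetric corr :=
  forall s t : seq (ins n), perm_eq s t -> corr s = corr t.

Definition corr_vanish_lt3 corr :=
  forall s : seq (ins n), (size s < 3)%N -> corr s = 0.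

Definition metric corr : 'M[K]_n.+1 :=
  \matrix_(a, b) corr [:: (a, 0%N); (b, 0%N); (ord0, 0%N)].

Definition metric_nondeg corr := metric corr \in unitmx.

Definition metric_inv corr : 'M[K]_n.+1 := invmx (metric corr).

(* Genus zero TRR, as an identity of formal power series in the b^a_k,
   written coefficientwise: the Taylor coefficient d^L/db^L at b = 0 of
   <<X>>_0 is <X L>_0, and a product of two series has the Leibniz
   coefficient (sum over all splittings of the list L of insertions). *)
Definition TRR corr :=
  forall (a b c : 'I_n.+1) (i j k : nat) (L : seq (ins n)),
    corr [:: (a, i.+1), (b, j), (c, k) & L] =
    \sum_(sg < n.+1) \sum_(tau < n.+1) metric_inv corr sg tau *
      \sum_(m : (size L).-tuple bool)
        corr [:: (a, i), (tau, 0%N) & mask m L] *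
        corr [:: (sg, 0%N), (b, j), (c, k) & mask (map negb m) L].

Definition genus_zero_data corr :=
  [/\ corr_symmetric corr, corr_vanish_lt3 corr, metric_nondeg corr & TRR corr].

End Data.

(* A jet variable d_z^m lambda^a_k is the triple (a, k, m).            *)
(* A formal power series F in (possibly infinitely many) commuting     *)
(* variables over a field of characteristic 0 is encoded by its Taylor *)
(* coefficients: F s = (d/dx_{s_1} ... d/dx_{s_r} F)(0) for every list *)
(* s of variables, i.e. F = sum over multisets s of F s * x^s / s!.    *)
(* Such a coefficient function must be symmetric.                       *)

Definition jvar (n : nat) := ('I_n.+1 * nat * nat)%type.
Definition jv_ind n (v : jvar n) : 'I_n.+1 := v.1.1.
Definition jv_desc n (v : jvar n) : nat := v.1.2.
Definition jv_jet n (v : jvar n) : nat := v.2.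

Section Series.
Variables (K : fieldType) (n : nat).

Definition pseries := seq (jvar n) -> K.

Definition ps_symmetric (F : pseries) :=
  forall s t, perm_eq s t -> F s = F t.

Definition ps_add (F G : pseries) : pseries := fun s => F s + G s.
Definition ps_opp (F : pseries) : pseries := fun s => - F s.
Definition ps_scale (c : K) (F : pseries) : pseries := fun s => c * F s.
Definition ps_zero : pseries := fun _ => 0.

(* product: Leibniz rule for Taylor coefficients *)
Definition ps_mul (F G : pseries) : pseries := fun s =>
  \sum_(m : (size s).-tuple bool) F (mask m s) * G (mask (map negb m) s).

Definition ps_pd (v : jvar n) (F : pseries) : pseries := fun s => F (v :: s).

Definition rem_at (i : nat) (s : seq (jvar n)) := take i s ++ drop i.+1 s.

(* the derivation d_z : d_z (d_z^m lambda^a_k) = d_z^{m+1} lambda^a_k,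
   i.e. d_z F = sum_v x_{v+} dF/dx_v; on Taylor coefficients:
   (d_z F)(s) = sum over positions i of s holding a variable of jet order
   m+1 >= 1 of F((a,k,m) :: s with position i removed). *)
Definition ps_dz (F : pseries) : pseries := fun s =>
  \sum_(i < size s)
    let v := nth (ord0, 0%N, 0%N) s i in
    if (0 < jv_jet v)%N
    then F ((jv_ind v, jv_desc v, (jv_jet v).-1) :: rem_at i s)
    else 0.

Definition jweight (s : seq (jvar n)) : nat := \sum_(v <- s) jv_jet v.

(* variational derivative  sum_k (-d_z)^k dF/d(d_z^k lambda^a_0).
   The sum over k is a formal infinite sum; (-d_z)^k G has only monomials
   of jet weight >= k, so the coefficient at s only receives contributions
   from k <= jweight s, and the truncation below is exact. *)
Definition ps_vard (a : 'I_n.+1) (F : pseries) : pseries := fun s =>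
  \sum_(k < (jweight s).+1)
     iter k (fun X => ps_opp (ps_dz X)) (ps_pd (a, 0%N, nat_of_ord k) F) s.

Definition bracket (ginv : 'M[K]_n.+1) (L1 L2 : pseries) : pseries := fun s =>
  \sum_(a < n.+1) \sum_(b < n.+1)
     ginv a b * ps_mul (ps_vard a L1) (ps_dz (ps_vard b L2)) s.

(* The current observable  \oint_C J^{(1)}_L  vanishes: L is a total
   d_z-derivative in the power series ring. *)
Definition oint_current_zero (L : pseries) :=
  exists F : pseries, ps_symmetric F /\ ps_dz F = L.

(* {oint J_{L1}, oint J_{L2}}_C = oint J_{[L1,L2]} *)
Definition current_bracket_zero (ginv : 'M[K]_n.+1) (L1 L2 : pseries) :=
  oint_current_zero (bracket ginv L1 L2).

(* G_{k,a} = < O^{(k)}_a exp(sum_b lambda^b_0 O_b) >_0 in C[[lambda^a_0]]: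
   Taylor coefficient at lambda^{b_1}_0 ... lambda^{b_r}_0 is
   < O^{(k)}_a O_{b_1} ... O_{b_r} >_0, and 0 at any monomial involving a
   variable other than the lambda^b_0 = d_z^0 lambda^b_0. *)
Definition Gser (corr : seq (ins n) -> K) (k : nat) (a : 'I_n.+1) : pseries :=
  fun s =>
    if all (fun v => (jv_desc v == 0%N) && (jv_jet v == 0%N)) s
    then corr ((a, k) :: map (fun v => (jv_ind v, 0%N)) s)
    else 0.

End Series.

(* Main.v *)
Require Import Defs.
From mathcomp Require Import all_boot all_order all_algebra.
From mathcomp Require Import complex.
From mathcomp Require Import reals.
From Stdlib Require Import FunctionalExtensionality.
Set Implicit Arguments. Unset Strict Implicit. Unset Printing Implicit Defensive.
Import GRing.Theory Num.Theory.
Local Open Scope ring_scope.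

Section Aux.
Variables (K : fieldType) (n : nat).

Definition pureb (v : jvar n) := (jv_desc v == 0%N) && (jv_jet v == 0%N).
Definition specb (v : jvar n) := (jv_desc v == 0%N) && (jv_jet v == 1%N).
Definition puresupp (A : pseries K n) := forall s, ~~ all pureb s -> A s = 0.

Definition Lin (H : 'I_n.+1 -> pseries K n) : pseries K n := fun s =>
  \sum_(i < size s)
    let v := nth (ord0, 0%N, 0%N) s i in
    if specb v && all pureb (rem_at i s) then H (jv_ind v) (rem_at i s) else 0.

Lemma sum_tuple_cons N (f : N.+1.-tuple bool -> K) :
  \sum_(m : N.+1.-tuple bool) f m =
  \sum_(m : N.-tuple bool) (f (cons_tuple true m) + f (cons_tuple false m)).
Proof.
have -> : \sum_(m : N.-tuple bool) (f (cons_tuple true m) + f (cons_tuple false m))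
   = \sum_(p : bool * N.-tuple bool) f (cons_tuple p.1 p.2).
  rewrite -(pair_big xpredT xpredT (fun b m => f (cons_tuple b m))) /=.
  rewrite exchange_big /=; apply: eq_bigr => m _; by rewrite big_bool.
rewrite (reindex (fun p : bool * N.-tuple bool => cons_tuple p.1 p.2)) //.
exists (fun m : N.+1.-tuple bool => (thead m, behead_tuple m)).
  move=> [b m] _ /=; rewrite theadE; congr pair; exact: val_inj.
move=> m _ /=; by rewrite [RHS]tuple_eta; apply: val_inj.
Qed.

Lemma mul_cons (F G : pseries K n) x t :
  ps_mul F G (x :: t) = ps_mul (ps_pd x F) G t + ps_mul F (ps_pd x G) t.
Proof.
rewrite /ps_mul /= sum_tuple_cons -big_split /=.
by apply: eq_bigr.
Qed.

Lemma mul_ext (A X Y : pseries K n) t :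
  (forall r, X r = Y r) -> ps_mul A X t = ps_mul A Y t.
Proof. by move=> h; apply: eq_bigr => m _; rewrite h. Qed.

Lemma mulD2 (A X Y : pseries K n) t :
  ps_mul A (fun r => X r + Y r) t = ps_mul A X t + ps_mul A Y t.
Proof. by rewrite /ps_mul -big_split; apply: eq_bigr => m _; rewrite mulrDr. Qed.

Lemma mul0l (A X : pseries K n) t : (forall r, A r = 0) -> ps_mul A X t = 0.
Proof. by move=> h; apply: big1 => m _; rewrite h mul0r. Qed.

Lemma my_all_mask (p : pred (jvar n)) (t : seq (jvar n)) (m : seq bool) :
  size m = size t ->
  all p (mask m t) && all p (mask (map negb m) t) = all p t.
Proof.
elim: t m => [|x t IH] [|b m] //= [/IH] {}IH.
by case: b => /=; case: (p x) => /=; rewrite -?IH ?andbF // andbC.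
Qed.

Lemma mul_pure (A Y : pseries K n) (b : bool) t : puresupp A ->
  ps_mul A (fun r => if b && all pureb r then Y r else 0) t
  = if b && all pureb t then ps_mul A Y t else 0.
Proof.
move=> hA; case: b => /=; last by apply: big1 => m _; rewrite mulr0.
case: (boolP (all pureb t)) => ht.
  apply: eq_bigr => m _.
  by move: (@my_all_mask pureb t m (size_tuple m)); rewrite ht => /andP [_ ->].
apply: big1 => m _.
move: (@my_all_mask pureb t m (size_tuple m)); rewrite (negbTE ht).
case: (boolP (all pureb (mask m t))) => h1 /=.
  by move=> ->; rewrite mulr0.
by move=> _; rewrite hA // mul0r.
Qed.

Lemma Lin_cons H x t :
  Lin H (x :: t) =
  (if specb x && all pureb t then H (jv_ind x) t else 0) +
  (if pureb x then Lin (fun c => ps_pd x (H c)) t else 0).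
Proof.
rewrite /Lin /= big_ord_recl /=.
have -> : rem_at 0 (x :: t) = t by rewrite /rem_at /= drop0.
congr (_ + _).
case: (pureb x); last by apply: big1 => i _; rewrite /= andbF.
apply: eq_bigr => i _ /=.
have -> : rem_at (bump 0 i) (x :: t) = x :: rem_at i t by [].
by rewrite add0n.
Qed.

Lemma Lin_add X Y t :
  Lin (fun c r => X c r + Y c r) t = Lin X t + Lin Y t.
Proof.
rewrite /Lin -big_split; apply: eq_bigr => i _ /=.
by case: ifP; rewrite ?addr0.
Qed.

Lemma Lin_ext X Y t :
  (forall c r, all pureb r -> X c r = Y c r) -> Lin X t = Lin Y t.
Proof.
move=> h; apply: eq_bigr => i _ /=.
by case: ifP => // /andP [_ hr]; rewrite h.
Qed.

Lemma Lin_zero X t : (forall c r, X c r = 0) -> Lin X t = 0.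
Proof. by move=> h; apply: big1 => i _ /=; case: ifP. Qed.

Lemma puresupp_pd x A : puresupp A -> puresupp (ps_pd x A).
Proof. by move=> h s hs; rewrite /ps_pd h //= negb_and hs orbT. Qed.

Lemma mul_Lin t : forall A H, puresupp A ->
  ps_mul A (Lin H) t = Lin (fun c => ps_mul A (H c)) t.
Proof.
elim: t => [|x t IH] A H hA.
  have L0 : forall X, Lin X [::] = 0 by move=> X; rewrite /Lin big_ord0.
  rewrite L0; apply: big1 => m _.
  by rewrite (tuple0 m) /= L0 mulr0.
rewrite mul_cons Lin_cons.
have hpd : ps_pd x (Lin H) = fun r =>
  (if specb x && all pureb r then H (jv_ind x) r else 0) +
  (if pureb x then Lin (fun c => ps_pd x (H c)) r else 0).
  by apply: functional_extensionality => r; rewrite /ps_pd Lin_cons.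
rewrite hpd mulD2 mul_pure //.
case: (boolP (pureb x)) => px.
  have -> : specb x = false.
    by move: px; rewrite /pureb /specb => /andP [_ /eqP ->]; rewrite andbF.
  rewrite /= !add0r.
  transitivity (ps_mul (ps_pd x A) (Lin H) t + ps_mul A (Lin (fun c => ps_pd x (H c))) t); first by [].
  rewrite (IH (ps_pd x A)); last exact: puresupp_pd.
  rewrite IH //.
  rewrite -Lin_add; apply: Lin_ext => c r _.
  by rewrite /ps_pd mul_cons.
rewrite mul0l; last by move=> r; rewrite /ps_pd hA //= negb_and px.
have -> : ps_mul A (fun _ => 0) t = 0 by apply: big1 => m _; rewrite mulr0.
by rewrite add0r !addr0.
Qed.

Lemma dz_Lin H : puresupp H ->
  ps_dz H = Lin (fun c => ps_pd (c, 0%N, 0%N) H).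
Proof.
move=> hH; apply: functional_extensionality => s.
apply: eq_bigr => i _ /=.
set v := nth _ s i; set r := rem_at i s.
case: v => [[c d] j] /=; rewrite /specb /jv_jet /jv_desc /jv_ind /=.
case: j => [|j] /=; first by rewrite andbF.
case: (boolP ((d == 0%N) && (j.+1 == 1%N))) => /=.
  move=> /andP [/eqP -> /eqP [->]].
  case: (boolP (all pureb r)) => hr //.
  by rewrite /ps_pd hH //= negb_and hr orbT.
move=> hn; rewrite hH //= negb_and; apply/orP; left.
rewrite /pureb /jv_desc /jv_jet /=; apply: contra hn => /andP [-> /eqP ->].
by [].
Qed.

Lemma iter_zero k (X : pseries K n) : (forall s, X s = 0) ->
  forall s, iter k (fun Y => ps_opp (ps_dz Y)) X s = 0.
Proof.
move=> h; elim: k => [|k IH] s; first exact: h.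
rewrite /= /ps_opp /ps_dz big1 ?oppr0 // => i _.
by case: ifP => // _; rewrite IH.
Qed.


Lemma Lin_sum2 (w : 'I_n.+1 -> 'I_n.+1 -> K) (X : 'I_n.+1 -> 'I_n.+1 -> 'I_n.+1 -> pseries K n) s :
  \sum_a \sum_b w a b * Lin (X a b) s =
  Lin (fun c r => \sum_a \sum_b w a b * X a b c r) s.
Proof.
transitivity (\sum_a \sum_b \sum_(i < size s) w a b *
   (let v := nth (ord0, 0%N, 0%N) s i in
    if specb v && all pureb (rem_at i s) then X a b (jv_ind v) (rem_at i s) else 0)).
  by apply: eq_bigr => a _; apply: eq_bigr => b _; rewrite /Lin mulr_sumr.
under eq_bigr do rewrite exchange_big.
rewrite exchange_big /Lin; apply: eq_bigr => i _ /=.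
case: ifP => _ //.
by rewrite big1 // => a _; rewrite big1 // => b _; rewrite mulr0.
Qed.

End Aux.
Section Main.
Variables (K : fieldType) (n : nat) (corr : seq (ins n) -> K).
Hypothesis Hc : genus_zero_data corr.

Lemma puresupp_G k al : puresupp (Gser corr k al).
Proof. by move=> s hs; rewrite /Gser; case: ifP => // h; case/negP: hs; exact: h. Qed.

Lemma vard_G k al a : ps_vard a (Gser corr k al) = ps_pd (a, 0%N, 0%N) (Gser corr k al).
Proof.
apply: functional_extensionality => s.
rewrite /ps_vard big_ord_recl big1 ?addr0 // => i _.
apply: iter_zero => r.
by rewrite /ps_pd /Gser /=.
Qed.

Definition Fser k al m be : pseries K n := fun s =>
  if all (@pureb n) s then corr ((al, k.+1) :: (be, m) :: map (fun v => (jv_ind v, 0%N)) s) else 0.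

Lemma puresupp_F k al m be : puresupp (Fser k al m be).
Proof. by move=> s hs; rewrite /Fser (negbTE hs). Qed.

Lemma sym_F k al m be : ps_symmetric (Fser k al m be).
Proof.
move: Hc => [hs _ _ _] s t hst.
rewrite /Fser (perm_all _ hst); case: ifP => // _.
by apply: hs; rewrite !perm_cons; apply: perm_map.
Qed.

Lemma ginv_sym a b : metric_inv corr a b = metric_inv corr b a.
Proof.
move: Hc => [hs _ _ _].
have hM : (metric corr)^T = metric corr.
  apply/matrixP => i j; rewrite !mxE; apply: hs.
  by rewrite (perm_catCA [:: (j, 0%N)] [:: (i, 0%N)]).
rewrite /metric_inv -[in LHS]hM -trmx_inv mxE.
by [].
Qed.


Lemma trr_step k al m be c r : all (@pureb n) r ->
  \sum_a \sum_b metric_inv corr a b *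
     ps_mul (ps_pd (a, 0%N, 0%N) (Gser corr k al))
            (ps_pd (c, 0%N, 0%N) (ps_pd (b, 0%N, 0%N) (Gser corr m be))) r
  = ps_pd (c, 0%N, 0%N) (Fser k al m be) r.
Proof.
move=> hr; have [hs _ _ htrr] := Hc.
rewrite /ps_pd /Fser /= {1}/pureb /= hr.
set L := map _ r.
rewrite (hs _ [:: (al, k.+1), (c, 0%N), (be, m) & L]); last first.
  by rewrite perm_cons (perm_catCA [:: (be, m)] [:: (c, 0%N)]).
rewrite htrr exchange_big /=.
apply: eq_bigr => a _; apply: eq_bigr => b _.
rewrite ginv_sym; congr (_ * _).
rewrite /ps_mul /L size_map.
apply: eq_bigr => mm _.
have := @my_all_mask n (@pureb n) r mm (size_tuple mm); rewrite hr => /andP [h1 h2].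
rewrite /Gser /= h1 h2 /= -!map_mask.
congr (_ * _); apply: hs.
by rewrite (perm_catCA [:: (be, m)] [:: (a, 0%N); (c, 0%N)]).
Qed.


Lemma main_gen k al m be :
  current_bracket_zero (metric_inv corr) (Gser corr k al) (Gser corr m be).
Proof.
exists (Fser k al m be); split; first exact: sym_F.
apply: functional_extensionality => s.
rewrite (dz_Lin (@puresupp_F k al m be)) /bracket.
transitivity (\sum_a \sum_b metric_inv corr a b *
   Lin (fun c => ps_mul (ps_pd (a, 0%N, 0%N) (Gser corr k al))
         (ps_pd (c, 0%N, 0%N) (ps_pd (b, 0%N, 0%N) (Gser corr m be)))) s).
  rewrite Lin_sum2; apply: Lin_ext => c r hr; by rewrite trr_step.
apply: eq_bigr => a _; apply: eq_bigr => b _.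
rewrite !vard_G (dz_Lin (puresupp_pd _ (@puresupp_G m be))) mul_Lin //.
exact: puresupp_pd (@puresupp_G k al).
Qed.

End Main.

Unset Implicit Arguments.
Theorem mainTheorem8 (R : realType) (n : nat) (corr : seq (ins n) -> R[i])
  (Hcorr : genus_zero_data corr) :
  forall (k m : nat) (a b : 'I_n.+1),
    current_bracket_zero (metric_inv corr) (Gser corr k a) (Gser corr m b).
Proof. by move=> k m a b; apply: main_gen. Qed.
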